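(* Let $R$ be a $*$-ring with unity and $a,b,c\in R$. Then: (1) $a\perp a$ implies $a=0$. (2) $a\perp b$ iff $b\perp a$ iff $a\perp(-b)$. (3) If $a\perp b$ and $c\leq a$, then $c\perp b$. (4) $a\perp b$ iff $a\leq a-b$. (5) If $a\leq b$, then $b-a\leq b$ and $b-a\perp a$. (6) If $a\perp b$, then the only common lower bound of $a$ and $b$ is $0$ (so $a\wedge b=0$), and $a+b$ is an upper bound of both $a$ and $b$. (7) If $a\perp b$ and $(a+b)\perp c$, then $a\perp(b+c)$.
   Context: Natural partial order: $a\leq b$ iff there is $x\in R$ with $a=xa=xb=ax^*=bx^*$. Orthogonality: $a\perp b$ iff there exists $x\in R$ with $xa=a=ax^*$ and $xb=0=bx^*$. *)

(* Defs.v *)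
From HB Require Import structures.
From mathcomp Require Import all_boot all_order all_algebra.
Set Implicit Arguments. Unset Strict Implicit. Unset Printing Implicit Defensive.
Import GRing.Theory.
Local Open Scope ring_scope.

Definition is_involution (R : pzRingType) (star : R -> R) : Prop :=
  [/\ forall x y : R, star (x + y) = star x + star y,
      forall x y : R, star (x * y) = star y * star x
    & forall x : R, star (star x) = x].

Definition star_le (R : pzRingType) (star : R -> R) (a b : R) : Prop :=
  exists x : R, [/\ a = x * a, x * a = x * b, x * b = a * star x
                  & a * star x = b * star x].

Definition star_orth (R : pzRingType) (star : R -> R) (a b : R) : Prop :=
  exists x : R, [/\ x * a = a, a = a * star x, x * b = 0 & 0 = b * star x].

(* Main.v *)
Require Import Defs.
From mathcomp Require Import all_boot all_order all_algebra.
Import GRing.Theory.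
Local Open Scope ring_scope.

Section S.
Variables (R : pzRingType) (star : R -> R) (Hstar : is_involution star).

Lemma sD x y : star (x + y) = star x + star y. Proof. by case: Hstar. Qed.
Lemma sM x y : star (x * y) = star y * star x. Proof. by case: Hstar. Qed.
Lemma sK x : star (star x) = x. Proof. by case: Hstar. Qed.
Lemma s0 : star 0 = 0.
Proof. apply: (@addrI _ (star 0)); by rewrite -sD !addr0. Qed.
Lemma sN x : star (- x) = - star x.
Proof. apply: (@addrI _ (star x)); by rewrite -sD !subrr s0. Qed.
Lemma s1 : star 1 = 1.
Proof. have h := sM (star 1) 1; rewrite mulr1 !sK mulr1 in h; by rewrite -h. Qed.
Lemma s1B x : star (1 - x) = 1 - star x.
Proof. by rewrite sD sN s1. Qed.

Lemma orth_sym a b : star_orth star a b -> star_orth star b a.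
Proof.
case=> x [h1 h2 h3 h4]; exists (1 - x); rewrite s1B; split.
- by rewrite mulrBl mul1r h3 subr0.
- by rewrite mulrBr mulr1 -h4 subr0.
- by rewrite mulrBl mul1r h1 subrr.
- by rewrite mulrBr mulr1 -h2 subrr.
Qed.

Lemma orth_le a b : star_orth star a b -> star_le star a (a + b).
Proof.
case=> x [h1 h2 h3 h4]; exists x; split.
- by rewrite h1.
- by rewrite mulrDr h3 addr0.
- by rewrite mulrDr h3 addr0 h1 -h2.
- by rewrite mulrDl -h4 addr0.
Qed.
End S.

Theorem mainTheorem6 (R : pzRingType) (star : R -> R)
    (Hstar : is_involution star) (a b c : R) :
  (* (1) *) (star_orth star a a -> a = 0) /\
      (* (2) *) ((star_orth star a b <-> star_orth star b a)
                /\ (star_orth star b a <-> star_orth star a (- b))) /\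
      (* (3) *) (star_orth star a b -> star_le star c a -> star_orth star c b) /\
      (* (4) *) (star_orth star a b <-> star_le star a (a - b)) /\
      (* (5) *) (star_le star a b -> star_le star (b - a) b /\ star_orth star (b - a) a) /\
      (* (6) *) (star_orth star a b ->
                   [/\ star_le star 0 a, star_le star 0 b,
                       (forall d : R, star_le star d a -> star_le star d b -> d = 0),
                       star_le star a (a + b) & star_le star b (a + b)]) /\
      (* (7) *) (star_orth star a b -> star_orth star (a + b) c ->
                   star_orth star a (b + c)).
Proof.
have sym := @orth_sym _ _ Hstar.
split; first by case=> x [h1 _ h3 _]; rewrite -h1 h3.
split.
  have negb : forall b, star_orth star a b -> star_orth star a (- b).
    move=> b' [x [h1 h2 h3 h4]]; exists x; split=> //.
      by rewrite mulrN h3 oppr0.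
    by rewrite mulNr -h4 oppr0.
  split; first by split; apply: sym.
  split; first by move/sym/negb.
  by move/negb; rewrite opprK => /sym.
split.
  case=> x [h1 h2 h3 h4] [y [k1 k2 k3 k4]]; exists x.
  have ec : c = a * star y by rewrite k1 k2 k3 k4.
  have ec' : c = y * a by rewrite k1 k2.
  split=> //.
  - by rewrite ec mulrA h1.
  - by rewrite {2}ec' -mulrA -h2 -ec'.
split.
  split.
    case=> x [h1 h2 h3 h4]; exists x; split.
    - by rewrite h1.
    - by rewrite mulrBr h3 subr0.
    - by rewrite mulrBr h3 subr0 h1 -h2.
    - by rewrite mulrBl -h4 subr0.
  case=> x [h1 h2 h3 h4]; exists x; split.
  - by rewrite -h1.
  - by rewrite -h3 -h2 -h1.
  - have e := mulrBr x a b; rewrite -h2 in e.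
    have : x*a - x*b = x*a - 0 by rewrite subr0 -e.
    by move/addrI/oppr_inj.
  - have e := mulrBl (star x) a b; rewrite -h4 in e.
    have : a * star x - b * star x = a * star x - 0 by rewrite subr0 -e.
    by move/addrI/oppr_inj.
split.
  case=> x [h1 h2 h3 h4].
  have e1 : x * b = a by rewrite -h2 -h1.
  have e2 : a * star x = a by rewrite -h3 e1.
  have e3 : b * star x = a by rewrite -h4 e2.
  split; exists (1 - x); rewrite ?(@s1B _ _ Hstar); split.
  all: rewrite ?(mulrBl, mulrBr, mul1r, mulr1) ?e1 ?e2 ?e3 -?h1 ?subrr ?subr0 //.
split.
  move=> o; split.
  - by exists 0; split; rewrite ?(@s0 _ _ Hstar) ?mul0r ?mulr0.
  - by exists 0; split; rewrite ?(@s0 _ _ Hstar) ?mul0r ?mulr0.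
  - case: o => x [h1 h2 h3 h4] d [y [k1 k2 k3 k4]] [z [l1 l2 l3 l4]].
    have dy : d = y * a by rewrite k1 k2.
    have dz : d = z * b by rewrite l1 l2.
    have : d * star x = 0 by rewrite dz -mulrA -h4 mulr0.
    by rewrite dy -mulrA -h2.
  - exact: orth_le o.
  - by rewrite addrC; apply: orth_le (sym _ _ o).
case=> x [h1 h2 h3 h4] [y [k1 k2 k3 k4]].
have ab : a = x * (a + b) by rewrite mulrDr h3 addr0 h1.
have ab' : a = (a + b) * star x by rewrite mulrDl -h4 addr0.
have ya : y * a = a by rewrite {1}ab' mulrA k1 -ab'.
have ay : a * star y = a by rewrite {1}ab -mulrA -k2 -ab.
have yb : y * b = b.
  by apply: (@addrI _ a); rewrite -{1}ya -mulrDr k1.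
have by_ : b * star y = b.
  by apply: (@addrI _ a); rewrite -{1}ay -mulrDl -k2.
exists (x * y); rewrite (@sM _ _ Hstar); split.
- by rewrite -mulrA ya h1.
- by rewrite mulrA ay -h2.
- by rewrite -mulrA mulrDr yb k3 addr0 h3.
- by rewrite mulrDl !mulrA by_ -k4 -h4 mul0r addr0.
Qed.
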